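(* Let $n\ge1$ and $0\le j\le n-1$. For every graph $G^*$ on $n$ vertices with at most one loop per vertex, \[\lambda_1(G^* )-\lambda_{n-j}(G^* )\le \frac n2\left(1+\sqrt{\frac{j+2}{j+1}}\right).\] Consequently, $s_{0,j}\le \frac12\left(1+\sqrt{\frac{j+2}{j+1}}\right)$.
   Context: A graph with at most one loop per vertex on vertex set $\{1,\dots,n\}$ is identified with its adjacency matrix $A=(a_{uv})$, a symmetric $n\times n$ $(0,1)$-matrix where $a_{uv}=1$ iff $uv$ is an edge and $a_{uu}=1$ iff there is a loop at $u$. Its eigenvalues (of $A$) are listed as $\lambda_1\ge\cdots\ge\lambda_n$. For a simple graph $G$ on $n$ vertices, ${\rm spread}_{i,j}(G)=\lambda_{i+1}(G)-\lambda_{n-j}(G)$; ${\rm spread}_{i,j}(n)$ is the maximum of ${\rm spread}_{i,j}(G)$ over all simple graphs $G$ on $n$ vertices, and $s_{i,j}=\lim_{n\to\infty}{\rm spread}_{i,j}(n)/n$ (this limit is known to exist). *)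

(* Defs.v *)
From HB Require Import structures.
From mathcomp Require Import all_boot all_order all_algebra.
From mathcomp Require Import all_classical all_reals all_analysis.
Set Implicit Arguments. Unset Strict Implicit. Unset Printing Implicit Defensive.
Import Order.TTheory GRing.Theory Num.Theory.
Local Open Scope ring_scope.

(* A graph on vertex set 'I_n (= {1..n} shifted) with at most one loop per
   vertex is identified with its adjacency matrix: a symmetric boolean matrix;
   G i i = true means a loop at i. *)
Definition loopy_graph (n : nat) (G : 'M[bool]_n) : bool := G^T == G.

Definition simple_graph (n : nat) (G : 'M[bool]_n) : bool :=
  (G^T == G) && [forall i, ~~ G i i].

Definition adj_mx (R : realType) (n : nat) (G : 'M[bool]_n) : 'M[R]_n :=
  map_mx (fun b : bool => (b : nat)%:R) G.

Definition is_spectrum (R : realType) (n : nat) (A : 'M[R]_n) (s : seq R) : Prop :=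
  [/\ size s = n, sorted (fun x y => y <= x) s &
      char_poly A = \prod_(x <- s) ('X - x%:P)].

Definition eigvals (R : realType) (n : nat) (A : 'M[R]_n) : seq R :=
  xget [::] (is_spectrum A).

(* lambda_k(A), 1-indexed: lambda_k = (eigvals A)`_(k-1). *)
Definition lambda (R : realType) (n : nat) (A : 'M[R]_n) (k : nat) : R :=
  (eigvals A)`_(k.-1).

Definition spread_graph (R : realType) (i j n : nat) (G : 'M[bool]_n) : R :=
  lambda (adj_mx R G) i.+1 - lambda (adj_mx R G) (n - j).

(* The
   set of simple graphs is nonempty (edgeless graph) and each spread_{i,j}(G)
   with i <= n-1-j is >= 0, so folding Num.max from 0 gives the true maximum. *)
Definition spread_n (R : realType) (i j n : nat) : R :=
  \big[Num.max/0]_(G : 'M[bool]_n | simple_graph G) spread_graph R i j G.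

(* Main.v *)
Require Import Defs.
From HB Require Import structures.
From mathcomp Require Import all_boot all_order all_algebra.
From mathcomp Require Import all_classical all_reals all_analysis.
From mathcomp Require Import complex ring lra zify.
Set Implicit Arguments. Unset Strict Implicit. Unset Printing Implicit Defensive.
Import Order.TTheory GRing.Theory Num.Theory numFieldNormedType.Exports.
Local Open Scope classical_set_scope.
Local Open Scope ring_scope.

Section Spec.
Local Open Scope sesquilinear_scope.

Lemma char_poly_conj (F : fieldType) n (P D : 'M[F]_n) :
  P \in unitmx -> char_poly (invmx P *m D *m P) = char_poly D.
Proof.
move=> Pu; rewrite /char_poly /char_poly_mx.
set Q := map_mx polyC P; set Qi := map_mx polyC (invmx P).
have QiQ : Qi *m Q = 1%:M by rewrite -map_mxM mulVmx // map_mx1.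
have -> : 'X%:M - map_mx polyC (invmx P *m D *m P) = Qi *m ('X%:M - map_mx polyC D) *m Q.
  rewrite !map_mxM mulmxBr mulmxBl -/Q -/Qi; congr (_ - _).
  rewrite mul_mx_scalar -scalemxAl.
  by rewrite QiQ scalemx1.
rewrite !det_mulmx mulrC mulrA -det_mulmx.
by rewrite -[Q *m Qi]map_mxM mulmxV // map_mx1 det1 mul1r.
Qed.

Lemma herm_spec (C : numClosedFieldType) n (B : 'M[C]_n) (s : seq C) :
  B \is hermsymmx -> char_poly B = \prod_(x <- s) ('X - x%:P) ->
  \tr (B *m B) = \sum_(x <- s) x ^+ 2 /\
  forall m : C, (forall x, x \in s -> x <= m) -> forall v : 'rV[C]_n,
    (v *m B *m v^t*) 0 0 <= m * (v *m v^t*) 0 0.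
Proof.
move=> HB cpB.
have /orthomx_spectralP := hermitian_normalmx HB.
set P := spectralmx B; set d := spectral_diag B => BE.
have Pun : P \is unitarymx := spectral_unitarymx B.
have Pu : P \in unitmx := spectral_unit B.
have iP : invmx P = P^t* := invmx_unitary Pun.
have PPt : P *m P^t* = 1%:M by apply/unitarymxP.
have PtP : P^t* *m P = 1%:M by rewrite -iP mulVmx.
have cp : char_poly B = \prod_(i < n) ('X - (d 0 i)%:P).
  rewrite BE char_poly_conj // char_poly_trig ?diag_mx_is_trig //.
  by apply: eq_bigr => i _; rewrite mxE eqxx mulr1n.
have pe : perm_eq s [seq d 0 i | i <- enum 'I_n].
  by apply: prod_XsubC_eq; rewrite -cpB cp big_map big_enum.
split.
  rewrite BE iP !mulmxA -[P^t* *m diag_mx d *m P *m P^t*]mulmxA PPt mulmx1.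
  rewrite mxtrace_mulC !mulmxA PPt mul1mx.
  rewrite (perm_big _ pe) big_map big_enum /= mulmx_diag mxtrace_diag.
  by apply: eq_bigr => i _; rewrite mxE expr2.
move=> m hm v.
set u := P *m v^t*.
have vPt : v *m P^t* = u^t* by rewrite /u trmx_mul map_mxM trmxCK.
have -> : v *m B *m v^t* = u^t* *m diag_mx d *m u.
  by rewrite BE iP !mulmxA vPt -!mulmxA.
have -> : v *m v^t* = u^t* *m u.
  by rewrite -vPt /u -mulmxA [P^t* *m _]mulmxA PtP mul1mx.
rewrite mul_mx_diag !mxE big_distrr /=; apply: ler_sum => i _.
rewrite !mxE mulrAC mulrC; apply: ler_wpM2r.
  by rewrite mulrC mul_conjC_ge0.
by apply: hm; rewrite (perm_mem pe); apply: map_f; rewrite mem_enum.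
Qed.


Lemma real_spec (R : rcfType) n (A : 'M[R]_n) (s : seq R) :
  A^T = A -> char_poly A = \prod_(x <- s) ('X - x%:P) ->
  \tr (A *m A) = \sum_(x <- s) x ^+ 2 /\
  forall m : R, (forall x, x \in s -> x <= m) -> forall v : 'rV[R]_n,
    (v *m A *m v^T) 0 0 <= m * (v *m v^T) 0 0.
Proof.
move=> sA cpA.
pose f := (real_complex R : {rmorphism R -> R[i]}).
have conjf : forall x, (f x)^* = f x.
  move=> x; apply: conj_Creal; rewrite realE /f ler0c.
  by rewrite -[0 : R[i]](rmorph0 f) lecR; exact: le_total.
have mapT : forall p q (M : 'M[R]_(p, q)), (map_mx f M)^t* = map_mx f M^T.
  by move=> p q M; apply/matrixP => i j; rewrite !mxE conjf.
have trf : forall M : 'M[R]_n, \tr (map_mx f M) = f (\tr M).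
  by move=> M; rewrite /mxtrace rmorph_sum; apply: eq_bigr => i _; rewrite mxE.
have HB : map_mx f A \is hermsymmx.
  rewrite qualifE /= expr0 scale1r mapT sA //.
have cpB : char_poly (map_mx f A) = \prod_(x <- map f s) ('X - x%:P).
  rewrite -map_char_poly cpA rmorph_prod big_map; apply: eq_bigr => x _.
  exact: map_polyXsubC.
have [h1 h2] := herm_spec HB cpB.
split.
  apply: (@complexI R); rewrite -/f -trf map_mxM h1 big_map rmorph_sum.
  by apply: eq_bigr => x _; rewrite rmorphXn.
move=> m hm v.
have := h2 (f m) _ (map_mx f v).
rewrite mapT -!map_mxM ![map_mx f _ 0 0]mxE -rmorphM lecR; apply.
by move=> x /mapP [y ys ->]; rewrite lecR; exact: hm.
Qed.

End Spec.

Lemma final_ineq (R : realFieldType) (N m x y Q t : R) : 0 <= N -> 0 < m -> 0 <= t ->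
  t^+2 * m = m + 1 -> x^+2 + m * y^+2 <= Q -> Q <= N * x -> 0 <= y ->
  x + y <= N/2 * (1+t).
Proof.
move=> N0 m0 t0 ht h1 h2 y0.
set a := x - N/2.
have h3 : a^+2 + m * y^+2 <= N^+2/4 by rewrite /a; nra.
have h6 : m * (a+y)^+2 <= (m+1) * (a^+2 + m * y^+2).
  have : 0 <= (a - m * y)^+2 by apply: sqr_ge0.
  nra.
have h7 : (m+1) * (a^+2 + m * y^+2) <= (m+1) * (N^+2/4).
  by rewrite ler_pM2l //; lra.
have h8 : (m+1) * (N^+2/4) = m * (t*N/2)^+2.
  by rewrite -ht; rewrite !exprMn; field.
have h5 : (a+y)^+2 <= (t*N/2)^+2.
  by rewrite -(ler_pM2l m0); lra.
have h9 : 0 <= t*N/2 by apply: divr_ge0 => //; apply: mulr_ge0.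
have : a + y <= t*N/2.
  case: (lerP (a+y) (t*N/2)) => // hlt.
  have : (t*N/2)^+2 < (a+y)^+2 by nra.
  lra.
rewrite /a; lra.
Qed.

Lemma part1 (R : realType) (j n : nat) (G : 'M[bool]_n) :
  (1 <= n)%N -> (j <= n - 1)%N -> loopy_graph G ->
  lambda (adj_mx R G) 1 - lambda (adj_mx R G) (n - j)
    <= n%:R / 2 * (1 + Num.sqrt (j.+2%:R / j.+1%:R)).
Proof.
move=> n1 jn /eqP GT.
set t := Num.sqrt _.
have t1 : 1 <= t.
  rewrite /t -[X in X <= _]sqrtr1 ler_sqrt; last by apply: divr_ge0.
  by rewrite ler_pdivlMr ?ltr0Sn // mul1r ler_nat.
have ht : t^+2 * (j.+1)%:R = (j.+1)%:R + 1.
  rewrite sqr_sqrtr; last by apply: divr_ge0.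
  by rewrite divfK ?pnatr_eq0 // -[j.+2]addn1 natrD.
have c0 : 0 <= n%:R / 2 * (1 + t).
  by apply: mulr_ge0; [apply: divr_ge0 | lra].
rewrite /lambda.
set A := adj_mx R G.
case: (pselect (exists s, is_spectrum A s)) => [ex|nex]; last first.
  rewrite /eigvals xgetPN; last by move=> s hs; apply: nex; exists s.
  by rewrite !nth_nil subrr.
have : is_spectrum A (eigvals A) := xgetPex [::] ex.
set s := eigvals A; case=> sz srt cp.
have sA : A^T = A.
  by apply/matrixP => i k; rewrite !mxE -[in RHS]GT mxE.
have hA01 : forall i k, A i k * A i k = A i k.
  by move=> i k; rewrite /A /adj_mx mxE; case: (G i k); rewrite /= ?mul1r ?mul0r.
clearbody A.
have [htr hle] := real_spec sA cp.
set S := \sum_i \sum_k A i k.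
have trS : \tr (A *m A) = S.
  rewrite /mxtrace; apply: eq_bigr => i _; rewrite mxE; apply: eq_bigr => k _.
  have -> : A k i = A i k by rewrite -{1}sA mxE.
  exact: hA01.
have leT_tr : transitive (fun x y : R => y <= x).
  by move=> a b c h1 h2; exact: le_trans h2 h1.
have leT_refl : reflexive (fun x y : R => y <= x) by move=> a; exact: lexx.
have sle : forall i k, (i <= k < n)%N -> s`_k <= s`_i.
  move=> i k /andP[ik kn]; apply: (sorted_leq_nth leT_tr leT_refl 0 srt) => //.
    by rewrite inE sz; apply: leq_ltn_trans kn.
  by rewrite inE sz.
have hmax : forall x, x \in s -> x <= s`_0.
  move=> x /(nthP 0) [i isz <-]; apply: sle; rewrite leq0n /= -sz //.
have hv := hle (s`_0) hmax (const_mx 1).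
have vS : ((const_mx 1 : 'rV[R]_n) *m A *m (const_mx 1 : 'rV[R]_n)^T) 0 0 = S.
  rewrite mxE; under eq_bigr => k _ do rewrite !mxE mulr1.
  rewrite exchange_big; apply: eq_bigr => i _; apply: eq_bigr => k _.
  by rewrite mxE mul1r.
have vn : ((const_mx 1 : 'rV[R]_n) *m (const_mx 1 : 'rV[R]_n)^T) 0 0 = n%:R.
  rewrite mxE; under eq_bigr => k _ do rewrite !mxE mulr1.
  by rewrite sumr_const card_ord.
rewrite vS vn -trS htr in hv.
set p := (n - j).-1.
have [p0|pn0] := eqVneq p 0%N.
  by rewrite p0 subrr.
have p1 : (1 <= p)%N by rewrite lt0n.
have pn : (p < n)%N by rewrite /p; lia.
have dec : \sum_(x <- s) x ^+ 2 = s`_0 ^+ 2 + \sum_(1 <= i < p) s`_i ^+ 2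
    + \sum_(p <= i < n) s`_i ^+ 2.
  rewrite (big_nth 0) sz (@big_cat_nat _ _ _ p) //=; last exact: ltnW.
  by rewrite (@big_cat_nat _ _ _ 1) //= big_nat1.
have mid : 0 <= \sum_(1 <= i < p) s`_i ^+ 2.
  by apply: sumr_ge0 => i _; apply: sqr_ge0.
set y0 := s`_p.
have hlast0 : 0 <= \sum_(p <= i < n) s`_i ^+ 2.
  by apply: sumr_ge0 => i _; apply: sqr_ge0.
have [y0le|y0gt] := lerP y0 0; last first.
  have hs0 : s`_0 ^+ 2 <= s`_0 * n%:R by lra.
  have n0 : (0 : R) <= n%:R by apply: ler0n.
  have : s`_0 <= n%:R.
    rewrite leNgt; apply/negP => hh.
    have : s`_0 * n%:R < s`_0 * s`_0 by rewrite ltr_pM2l //; lra.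
    rewrite -expr2; lra.
  have : n%:R <= n%:R / 2 * (1 + t).
    have : n%:R / 2 * (1 + t) - n%:R = n%:R / 2 * (t - 1) by field.
    have : 0 <= n%:R / 2 * (t - 1) by apply: mulr_ge0; [apply: divr_ge0 | lra].
    lra.
  lra.
have hlast : (j.+1)%:R * y0 ^+ 2 <= \sum_(p <= i < n) s`_i ^+ 2.
  have -> : (j.+1)%:R * y0 ^+ 2 = \sum_(p <= i < n) y0 ^+ 2.
    by rewrite sumr_const_nat mulr_natl; congr (_ *+ _); rewrite /p; lia.
  rewrite big_nat_cond [X in _ <= X]big_nat_cond; apply: ler_sum => i.
  move=> /andP[/andP[hi1 hi2] _].
  have : s`_i <= y0 by apply: sle; rewrite hi1 hi2.
  nra.
have := @final_ineq R n%:R (j.+1)%:R (s`_0) (- y0) (\sum_(x <- s) x ^+ 2) t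
  (ler0n _ _) (ltr0Sn _ _) (le_trans ler01 t1) ht.
rewrite sqrrN.
move=> H; apply: H; [lra | rewrite mulrC; exact: hv | lra].
Qed.

Theorem theorem1p2 (R : realType) (j : nat) :
  (forall (n : nat) (G : 'M[bool]_n), (1 <= n)%N -> (j <= n - 1)%N ->
     loopy_graph G ->
     lambda (adj_mx R G) 1 - lambda (adj_mx R G) (n - j)
       <= n%:R / 2 * (1 + Num.sqrt (j.+2%:R / j.+1%:R)))
  /\
  (forall l : R,
     (fun n : nat => spread_n R 0 j n / n%:R) @ \oo --> l ->
     l <= 2^-1 * (1 + Num.sqrt (j.+2%:R / j.+1%:R))).
Proof.
split; first exact: part1.
move=> l hl.
set c := 2^-1 * _.
have ub : forall n, (j < n)%N -> spread_n R 0 j n / n%:R <= c.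
  move=> n jn.
  have n0 : (0 : R) < n%:R by rewrite ltr0n; lia.
  rewrite ler_pdivrMr // mulrC.
  apply: bigmax_le.
    by apply: mulr_ge0 => //; rewrite /c; apply: mulr_ge0; [lra | 
       have := sqrtr_ge0 (j.+2%:R / j.+1%:R : R); lra].
  move=> G /andP[sG _].
  have := @part1 R j n G _ _ sG; rewrite /spread_graph mulrA; apply; lia.
rewrite leNgt; apply/negP => hlt.
have := cvgr_gt l hl c hlt.
move=> [N _ hN].
have := hN (maxn N j.+1) (leq_maxl _ _) => /=.
have := ub (maxn N j.+1) (leq_maxr _ _).
lra.
Qed.
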